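(* Let $\mathbb{F}$ be a field of characteristic $2$ with at least $4$ elements, and let $B\in M_4(\mathbb{F})$ be a non-derogative matrix. (a) If $\operatorname{Trace}(B)=u_3\neq 0$, then for every $a\in\mathbb{F}$ with $a\neq 0$ and $a\neq u_3$, there exist $N,D\in M_4(\mathbb{F})$ with $B=N+D$, $N^2=0$, and $D$ diagonalizable with every eigenvalue in $\{0,\ a,\ u_3+a\}$. (b) If $\operatorname{Trace}(B)=0$, then for every $a\in\mathbb{F}$ with $a\neq 0,1$, there exist $N,D\in M_4(\mathbb{F})$ with $B=N+D$, $N^2=0$, and $D$ diagonalizable with eigenvalues $0,1,a,a+1$.
   Context: A square matrix is non-derogative if its minimal polynomial equals its characteristic polynomial. A matrix $D\in M_n(\mathbb{F})$ is diagonalizable if there exists an invertible $U\in M_n(\mathbb{F})$ such that $U^{-1}DU$ is diagonal. *)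

(* Defs.v *)
From mathcomp Require Import all_boot all_order all_algebra.
Set Implicit Arguments. Unset Strict Implicit. Unset Printing Implicit Defensive.
Import GRing.Theory.
Local Open Scope ring_scope.

Definition non_derogative (F : fieldType) (n : nat) (A : 'M[F]_n.+1) : Prop :=
  mxminpoly A = char_poly A.

(* Main.v *)
Require Import Defs.
From mathcomp Require Import all_boot all_order all_algebra.
From Stdlib Require Import Classical.
From mathcomp Require Import zify ring.
Set Implicit Arguments. Unset Strict Implicit. Unset Printing Implicit Defensive.
Import GRing.Theory.
Local Open Scope ring_scope.


Lemma natarith a b c d : (1 < b)%N -> (0 < c)%N -> (0 < a)%N ->
  ((a + (c + b).-1).-1 <= d)%N -> ((c + a).-1 < d)%N.
Proof. lia. Qed.

Section PolyS.
Variable F : fieldType.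
Implicit Types p q h : {poly F}.

Lemma irred_div_ex p : (1 < size p)%N -> exists q, irreducible_poly q /\ q %| p.
Proof.
have [s] := ubnP (size p); elim: s p => // s IH p sp p1.
case: (classic (irreducible_poly p)) => [ip|nip]; first by exists p.
have [q [sq qp nqp]] : exists q, [/\ size q != 1%N, q %| p & ~~ (q %= p)].
  apply: NNPP => Hn; apply: nip; split => // q sq qp.
  by apply: NNPP => Hn2; apply: Hn; exists q; split => //; apply/negP.
have p0 : p != 0 by rewrite -size_poly_gt0 (ltn_trans _ p1).
have q0 : q != 0 by apply: contraNneq p0 => q0; move: qp; rewrite q0 dvd0p.
have sqp : (size q < size p)%N.
  rewrite ltn_neqAle dvdp_leq // andbT.
  by apply: contraNneq nqp => /eqP; rewrite dvdp_size_eqp.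
have q1 : (1 < size q)%N.
  by rewrite ltn_neqAle eq_sym sq /= size_poly_gt0.
have [r [ir rq]] := IH q (leq_trans sqp sp) q1.
by exists r; split => //; apply: dvdp_trans rq qp.
Qed.

Lemma irred_coprime q p : irreducible_poly q -> ~~ (q %| p) -> coprimep q p.
Proof.
move=> iq nqp; rewrite coprimep_def; apply: NNPP => /negP Hs.
have := iq.2 _ Hs (dvdp_gcdl q p) => /eqp_dvdl Hd.
by move: (dvdp_gcdr q p); rewrite Hd (negbTE nqp).
Qed.

Lemma extract q f : (1 < size q)%N -> f != 0 ->
  exists r f1, f = q ^+ r * f1 /\ ~~ (q %| f1).
Proof.
move=> q1; have [s] := ubnP (size f); elim: s f => // s IH f sf f0.
have [qf|nqf] := boolP (q %| f); last by exists 0%N, f; rewrite expr0 mul1r.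
have q0 : q != 0 by rewrite -size_poly_gt0 (ltn_trans _ q1).
have ef := divpK qf.
have f10 : f %/ q != 0 by apply: contraNneq f0 => e; rewrite -ef e mul0r.
have sf1 : (size (f %/ q)%R < s)%N.
  rewrite size_divp //; have fp : (0 < size f)%N by rewrite size_poly_gt0.
  move: sf q1 fp; move: (size f) (size q) => a b; lia.
have [r [f1 [e nq]]] := IH _ sf1 f10.
exists r.+1, f1; split => //; rewrite -ef e exprS; ring.
Qed.

Lemma prime_pow_dvd q h m : irreducible_poly q -> h %| q ^+ m.+1 -> ~~ (h %| q ^+ m) ->
  q ^+ m.+1 %| h.
Proof.
move=> iq; have q0 := irredp_neq0 iq.
elim: m h => [|m IH] h hq nh.
  rewrite expr1; rewrite expr1 in hq; rewrite expr0 in nh.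
  have sh : size h != 1%N.
    by apply: contraNneq nh => /eqP sh1; rewrite dvdp1 sh1.
  by rewrite (eqp_dvdr _ (iq.2 _ sh hq)) dvdpp.
have [qh|nqh] := boolP (q %| h).
  rewrite -(divpK qh) exprSr dvdp_mul2r //.
  apply: IH.
  - by rewrite -(dvdp_mul2r _ _ q0) divpK // -exprSr.
  - by apply: contra nh => H; rewrite -(divpK qh) exprSr dvdp_mul2r.
have: coprimep h q by rewrite coprimep_sym irred_coprime.
move=> cq; move: hq; rewrite exprS Gauss_dvdpr //.
by rewrite (negbTE nh).
Qed.
End PolyS.

Section CycS.
Variables (F : fieldType) (n : nat) (A : 'M[F]_n.+1).
Local Notation hA := (horner_mx A).

Lemma hAM (v : 'rV_n.+1) p q : v *m hA p *m hA q = v *m hA (p * q).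
Proof. by rewrite rmorphM mulmxA. Qed.

Lemma ann_dvd (v : 'rV_n.+1) h p : v *m hA h = 0 -> h %| p -> v *m hA p = 0.
Proof. by move=> vh /divpK <-; rewrite mulrC -hAM vh mul0mx. Qed.

Definition lmp (v : 'rV_n.+1) f :=
  [/\ f \is monic, v *m hA f = 0 & forall p, v *m hA p = 0 -> f %| p].

Lemma lmp_ex v : exists f, lmp v f.
Proof.
suff H : forall s (p : {poly F}), (size p <= s)%N -> p != 0 -> v *m hA p = 0 -> exists f, lmp v f.
  apply: (H _ (mxminpoly A)) => //; last by rewrite mx_root_minpoly mulmx0.
  by rewrite monic_neq0 // mxminpoly_monic.
elim=> [|s IH] p; rewrite -/(size p).
  by rewrite leqn0 size_poly_eq0 => /eqP-> /eqP.
move=> sp p0 vp.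
case: (classic (forall q, v *m hA q = 0 -> p %| q)) => [Hall|].
  exists ((lead_coef p)^-1 *: p); split.
  - by apply/monicP; rewrite lead_coefZ mulVf // lead_coef_eq0.
  - by rewrite linearZ /= -scalemxAr vp scaler0.
  - by move=> q /Hall; rewrite dvdpZl // invr_eq0 lead_coef_eq0.
move=> /not_all_ex_not [q Hq0]; have Hq := not_imply_elim2 _ _ Hq0.
have vq : v *m hA q = 0.
  by apply: NNPP => Hn; apply: Hq0 => /Hn.
have Hpq : ~~ (p %| q) by apply/negP.
apply: (IH (q %% p)).
- by rewrite -ltnS (leq_trans _ sp) // ltn_modp.
- exact: Hpq.
- have : q %% p = q - q %/ p * p by rewrite {2}(divp_eq q p) addrC addKr.
  move=> ->; rewrite rmorphB mulmxBr vq sub0r.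
  by rewrite mulrC -hAM vp mul0mx oppr0.
Qed.

Lemma improve (v w : 'rV_n.+1) (f : {poly F}) : lmp v f -> w *m hA f != 0 ->
  exists z g, lmp z g /\ (size f < size g)%N.
Proof.
move=> [fm vf fmin] wf.
set w' := w *m hA f.
have [g0 [g0m w'g0 g0min]] := lmp_ex w'.
have g0n0 : g0 != 0 by rewrite monic_neq0.
have sg0 : (1 < size g0)%N.
  rewrite ltnNge; apply/negP => sg.
  have e : g0 = 1.
    rewrite (size1_polyC sg); congr (_%:P).
    move: g0m; rewrite monicE /lead_coef.
    have : size g0 = 1%N.
      by apply/eqP; rewrite eqn_leq sg /= size_poly_gt0.
    by move=> ->/eqP.
  by move: w'g0; rewrite e rmorph1 mulmx1; apply/eqP.
have [q [iq qg0]] := irred_div_ex sg0.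
have q1 := iq.1; have q0 := irredp_neq0 iq.
have f0 : f != 0 by rewrite monic_neq0.
have [r [f1 [ef nqf1]]] := extract q1 f0.
have cqf1 : coprimep q f1 by apply: irred_coprime.
set Q := q ^+ r.+1.
have cQf1 : coprimep Q f1 by apply: coprimep_expl.
set y := w *m hA ((g0 %/ q) * f1).
set z := v *m hA (q ^+ r) + y.
have yQ : y *m hA Q = 0.
  rewrite /y hAM.
  have -> : g0 %/ q * f1 * Q = f * g0.
    by rewrite /Q exprS ef -[in RHS](divpK qg0); ring.
  by rewrite -hAM w'g0.
have yqr : y *m hA (q ^+ r) != 0.
  rewrite /y hAM.
  have -> : g0 %/ q * f1 * q ^+ r = f * (g0 %/ q).
    by rewrite ef; ring.
  rewrite -hAM -/w'; apply/eqP => H.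
  have := g0min _ H.
  have dn0 : g0 %/ q != 0.
    by apply: contraNneq g0n0 => e; rewrite -(divpK qg0) e mul0r.
  move/(dvdp_leq dn0); rewrite size_divp //; move: sg0 q1.
  move: (size g0) (size q) => a b; lia.
have [h [hm yh hmin]] := lmp_ex y.
have hQ : h %| Q := hmin _ yQ.
have nhqr : ~~ (h %| q ^+ r).
  by apply: contra yqr => H; rewrite (ann_dvd yh H).
have Qh : Q %| h := prime_pow_dvd iq hQ nhqr.
have [g [gm zg gmin]] := lmp_ex z.
exists z, g; split; first by [].
have f1g : f1 %| g.
  have H1 : z *m hA (g * Q) = 0 by rewrite -hAM zg mul0mx.
  move: H1; rewrite /z mulmxDl (ann_dvd yQ (dvdp_mull _ (dvdpp _))) addr0 hAM => H1.
  have := fmin _ H1; rewrite ef dvdp_mul2l ?expf_neq0 //.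
  by rewrite Gauss_dvdpl // coprimep_sym.
have eg := divpK f1g.
have yg : y *m hA g = 0.
  have H : v *m hA (q ^+ r) *m hA g = 0.
    rewrite hAM.
    have -> : q ^+ r * g = f * (g %/ f1) by rewrite -[in LHS]eg ef; ring.
    by rewrite -hAM vf mul0mx.
  by move: zg; rewrite /z mulmxDl H add0r.
have Qg1 : Q %| g %/ f1.
  by have := dvdp_trans Qh (hmin _ yg); rewrite -{1}eg Gauss_dvdpl.
have g10 : g %/ f1 != 0.
  by apply: contraNneq (monic_neq0 gm) => e; rewrite -eg e mul0r.
have f10 : f1 != 0 by apply: contraNneq f0 => e; rewrite ef e mulr0.
have qr0 : q ^+ r != 0 by rewrite expf_neq0.
have : (size (f1 * Q)%R <= size g)%N.
  apply: dvdp_leq; first by rewrite monic_neq0.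
  by rewrite -eg mulrC dvdp_mul2r.
rewrite ef /Q exprSr !size_mul ?mulf_neq0 //.
have : (0 < size f1)%N by rewrite size_poly_gt0.
have : (0 < size (q ^+ r))%N by rewrite size_poly_gt0.
move: q1; move: (size f1) (size q) (size (q ^+ r)) (size g) => a b c d.
exact: natarith.
Qed.

Lemma deg_grow (hA0 : mxminpoly A = char_poly A) k : (k <= n.+1)%N ->
  exists v f, lmp v f /\ (k < size f)%N.
Proof.
have smin : size (mxminpoly A) = n.+2 by rewrite hA0 size_char_poly.
elim: k => [|k IH] hk.
  have [f lf] := lmp_ex 0; exists 0, f; split => //.
  by rewrite size_poly_gt0 monic_neq0 //; case: lf.
have [v [f [lf kf]]] := IH (ltnW hk).
have [kf1|] := boolP (k.+1 < size f)%N; first by exists v, f.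
rewrite -leqNgt => kf2.
have sf : size f = k.+1 by apply/eqP; rewrite eqn_leq kf2 kf.
have hf : hA f != 0.
  apply/eqP => H; have := mxminpoly_min H.
  case: lf => fm _ _; move/(dvdp_leq (monic_neq0 fm)).
  by rewrite smin sf; move: hk; move: (n) => m; lia.
have [i wi] : exists i, row i (hA f) != 0.
  apply: NNPP => Hn; apply/negP: hf; rewrite negbK; apply/eqP/row_matrixP => i.
  by rewrite row0; apply: NNPP => Hr; apply: Hn; exists i; apply/eqP.
have wi' : (delta_mx 0 i : 'rV_n.+1) *m hA f != 0 by rewrite -rowE.
have [z [g [lg fg]]] := improve lf wi'.
by exists z, g; split => //; rewrite (leq_trans _ fg) // sf.
Qed.

Lemma cyclic_vec (hA0 : mxminpoly A = char_poly A) :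
  exists v : 'rV_n.+1, \matrix_(i < n.+1) (v *m A ^+ i) \in unitmx.
Proof.
have smin : size (mxminpoly A) = n.+2 by rewrite hA0 size_char_poly.
have [v [f [[fm vf fmin] sf]]] := deg_grow hA0 (leqnn _).
exists v; rewrite -row_free_unit -kermx_eq0; apply/rowV0P => c /sub_kermxP cK.
pose p := \poly_(i < n.+1) c 0 (inord i).
have e : c *m \matrix_(i < n.+1) (v *m A ^+ i) = v *m hA p.
  rewrite mulmx_sum_row /p poly_def linear_sum mulmx_sumr; apply: eq_bigr => i _.
  by rewrite rowK linearZ /= rmorphXn /= horner_mx_X inord_val scalemxAr.
have p0 : p = 0.
  apply: contraTeq (size_poly n.+1 (fun i => c 0 (inord i))) => p0.
  rewrite -ltnNge (leq_trans sf) // dvdp_leq // fmin // -e cK //.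
apply/matrixP => i j; rewrite ord1 mxE.
have := congr1 (fun q : {poly F} => q`_j) p0.
by rewrite coef_poly ltn_ord inord_val coef0.
Qed.
End CycS.



Section M4S.
Variable F : fieldType.

Definition M4 (l : seq (seq F)) : 'M[F]_4 := \matrix_(i, j) nth 0 (nth [::] l i) j.

Lemma mul4E m n (A : 'M[F]_(m,4)) (B : 'M[F]_(4,n)) i j :
  (A *m B) i j = A i 0 * B 0 j + A i 1 * B 1 j + A i 2%:R * B 2%:R j + A i 3%:R * B 3%:R j.
Proof.
rewrite mxE !big_ord_recr big_ord0 /= add0r.
by congr (_ + _ + _ + _); congr (A _ _ * B _ _); apply/val_inj.
Qed.

Ltac m4tac := apply/matrixP; move=> [[|[|[|[|?]]]] ?] [[|[|[|[|?]]]] ?] //;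
  rewrite ?mul4E !mxE /=.

Variables (a b0 b1 b2 b3 : F).
Definition Cm := M4 [:: [:: 0; 1; 0; 0]; [:: 0; 0; 1; 0]; [:: 0; 0; 0; 1]; [:: b0; b1; b2; b3]].
Definition Da := M4 [:: [:: 0; 1; 0; 0]; [:: 0; -a; 0; 0]; [:: 0; a^+2; a; 1];
   [:: 0; b1 - a * b2 + a^+2 * b3; a * b3; b3]].
Definition Na := M4 [:: [:: 0; 0; 0; 0]; [:: 0; a; 1; 0]; [:: 0; -a^+2; -a; 0];
   [:: b0; a * b2 - a^+2 * b3; b2 - a * b3; 0]].

Lemma CNDa : Cm = Na + Da.
Proof. by m4tac; ring. Qed.

Lemma NNa : Na *m Na = 0.
Proof. by m4tac; ring. Qed.

Definition ca := b1 - a * b2 + a^+2 * b3.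
Definition P1a := M4 [:: [:: 0; 0; 0; 0]; [:: 0; 0; 0; 0];
  [:: 0; a^+3 + ca; 2%:R * a^+2 + a * b3; 2%:R * a + b3];
  [:: 0; b3 * (a^+3 + ca); b3 * (2%:R * a^+2 + a * b3); b3 * (2%:R * a + b3)]].

Lemma P1aE : Da *m (Da + a%:M) = P1a.
Proof. by m4tac; rewrite /ca; ring. Qed.

Lemma annDa : Da *m (Da + a%:M) *m (Da - (b3 + a)%:M) = 0.
Proof. by rewrite P1aE; m4tac; rewrite /ca; ring. Qed.

Definition yb := 1 + a + a^+2 - b2.
Definition gb := - (a + a^+2).
Definition Db := M4 [:: [:: 0; 1; 0; 0]; [:: 0; 0; 1; 0]; [:: 0; yb; 0; 1]; [:: 0; gb; b2; b3]].
Definition Nb := M4 [:: [:: 0; 0; 0; 0]; [:: 0; 0; 0; 0]; [:: 0; -yb; 0; 0]; [:: b0; b1 - gb; 0; 0]].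

Lemma CNDb : Cm = Nb + Db.
Proof. by m4tac; rewrite /yb /gb; ring. Qed.

Lemma NNb : Nb *m Nb = 0.
Proof. by m4tac; ring. Qed.

Definition asb := a + a^+2.
Definition P1b := M4 [:: [:: 0; -1; 1; 0]; [:: 0; yb; -1; 1]; [:: 0; gb - yb; yb + b2; -1];
   [:: 0; b2 * yb - gb; gb - b2; b2]].
Definition P2b := M4 [:: [:: - asb; 1; 1; 0]; [:: 0; yb - asb; 1; 1];
   [:: 0; gb + yb; yb + b2 - asb; 1]; [:: 0; b2 * yb + gb; gb + b2; b2 - asb]].

Lemma P1bE : b3 = 0 -> Db *m (Db - 1%:M) = P1b.
Proof. by move=> h3; m4tac; rewrite ?h3; ring. Qed.

Lemma P2bE : b3 = 0 -> (Db - a%:M) *m (Db - (- (1 + a))%:M) = P2b.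
Proof. by move=> h3; m4tac; rewrite ?h3 /asb; ring. Qed.

Lemma annDb : b3 = 0 ->
  Db *m (Db - 1%:M) *m ((Db - a%:M) *m (Db - (- (1 + a))%:M)) = 0.
Proof. by move=> h3; rewrite P1bE // P2bE //; m4tac; rewrite /yb /gb /asb; ring. Qed.

Definition evb (l : F) : 'rV[F]_4 :=
  \row_j nth 0 [:: l^+3 - (1 + a + a^+2) * l + a + a^+2; l^+2 - b2; l; 1] j.

Lemma evbP l : b3 = 0 -> l^+4 - (1 + a + a^+2) * l^+2 + (a + a^+2) * l = 0 ->
  evb l *m Db = l *: evb l.
Proof.
move=> h3 hl; apply/matrixP; move=> [[|?] ?] [[|[|[|[|?]]]] ?] //;
  rewrite ?mul4E !mxE /= ?h3 /yb /gb.
- have e : l * (l^+3 - (1 + a + a^+2) * l + a + a^+2) =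
    l^+4 - (1 + a + a^+2) * l^+2 + (a + a^+2) * l by ring.
  by rewrite e hl; ring.
all: ring.
Qed.

Lemma evb_neq0 l : evb l != 0.
Proof. by apply/eqP => /matrixP /(_ 0 3%:R); rewrite !mxE /= => /eqP; rewrite oner_eq0. Qed.
End M4S.

Lemma KB_lem (F : fieldType) (B : 'M[F]_4) (v : 'rV_4) :
  let K := \matrix_(i < 4) (v *m B ^+ i) in
  let bb := v *m B ^+ 4 *m invmx K in
  K \in unitmx ->
  K *m B = Cm (bb 0 0) (bb 0 1) (bb 0 (inord 2)) (bb 0 (inord 3)) *m K.
Proof.
move=> K bb Ku.
have bbK : bb *m K = v *m B ^+ 4 by rewrite /bb mulmxKV.
have eS k : B ^+ k *m B = B ^+ k.+1 by rewrite exprSr.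
apply/row_matrixP => i; rewrite !row_mul {1}/K rowK -mulmxA eS.
case: i => [[|[|[|[|i]]]] Hi] //.
1-3: rewrite [RHS]mulmx_sum_row !big_ord_recr big_ord0 /= /K !rowK !mxE /=;
  by rewrite !scale0r scale1r ?add0r ?addr0.
have -> : row (Ordinal Hi) (Cm (bb 0 0) (bb 0 1) (bb 0 (inord 2)) (bb 0 (inord 3))) = bb.
  apply/rowP => j; rewrite [LHS]mxE [LHS]mxE /=.
  by case: j => [[|[|[|[|j]]]] Hj] //=; congr (bb 0 _); apply/val_inj; rewrite /= ?inordK.
by rewrite bbK.
Qed.

Lemma conj_horner (F : fieldType) (K M : 'M[F]_4) p : K \in unitmx ->
  horner_mx (invmx K *m M *m K) p = invmx K *m horner_mx M p *m K.
Proof. by move=> Ku; rewrite horner_mx_uconjC. Qed.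

Lemma conj_mul (F : fieldType) (K M M' : 'M[F]_4) : K \in unitmx ->
  (invmx K *m M *m K) *m (invmx K *m M' *m K) = invmx K *m (M *m M') *m K.
Proof.
move=> Ku; rewrite !mulmxA; congr (_ *m _).
by rewrite -(mulmxA _ K) mulmxV // mulmx1.
Qed.

Theorem proposition2p5 (F : fieldType)
  (hchar : 2%N \in [pchar F])
  (hcard : exists s : seq F, uniq s /\ (4 <= size s)%N)
  (B : 'M[F]_4) (hB : non_derogative B) :
  (\tr B != 0 ->
     forall a : F, a != 0 -> a != \tr B ->
       exists N D : 'M[F]_4,
         [/\ B = N + D, N *m N = 0, diagonalizable D &
             forall x : F, eigenvalue D x -> x \in [:: 0; a; \tr B + a]])
  /\
  (\tr B = 0 ->
     forall a : F, a != 0 -> a != 1 ->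
       exists N D : 'M[F]_4,
         [/\ B = N + D, N *m N = 0, diagonalizable D &
             forall x : F, eigenvalue D x <-> x \in [:: 0; 1; a; a + 1]]).
Proof.
have [v Ku] := cyclic_vec hB.
have KB := KB_lem Ku.
set K := \matrix_(i < 4) (v *m B ^+ i) in Ku KB.
set bb := v *m B ^+ 4 *m invmx K in KB.
set b0 := bb 0 0 in KB; set b1 := bb 0 1 in KB;
set b2 := bb 0 (inord 2) in KB; set b3 := bb 0 (inord 3) in KB.
have eB : B = invmx K *m Cm b0 b1 b2 b3 *m K.
  by rewrite -mulmxA -KB mulKmx.
have etr : \tr B = b3.
  rewrite eB mxtrace_mulC mulmxA mulmxV // mul1mx /mxtrace.
  rewrite !big_ord_recr big_ord0 /= !mxE /= !add0r.
  by congr (bb 0 _); apply/val_inj; rewrite /= inordK.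
have opp2 := oppr_pchar2 hchar.
split.
  move=> trn0 a a0 atr.
  exists (invmx K *m Na a b0 b2 b3 *m K), (invmx K *m Da a b1 b2 b3 *m K).
  have hdiv : mxminpoly (invmx K *m Da a b1 b2 b3 *m K) %|
      \prod_(r <- [:: 0; a; \tr B + a]) ('X - r%:P).
    apply: mxminpoly_min; rewrite conj_horner //.
    rewrite !big_cons big_nil !rmorphM !rmorphB /= horner_mx_X !horner_mx_C.
    rewrite raddf0 subr0 -!mulmxE mulmx1 !mulmxA etr.
    have -> : Da a b1 b2 b3 - a%:M = Da a b1 b2 b3 + a%:M.
      by rewrite -[X in _ - X%:M](opp2 a) raddfN opprK.
    by rewrite -!(mulmxA (invmx K)) annDa ?mul0mx ?mulmx0 ?mul0mx.
  split.
  - by rewrite {1}eB -mulmxDl -mulmxDr (CNDa a).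
  - by rewrite conj_mul // NNa mulmx0 mul0mx.
  - apply/diagonalizableP; exists [:: 0; a; \tr B + a] => //=.
    have h1 : (0 == a) = false by rewrite eq_sym (negbTE a0).
    have h2 : (0 == \tr B + a) = false.
      apply/negbTE/eqP => /esym/eqP; rewrite addr_eq0 opp2 => /eqP h.
      by move: atr; rewrite -h eqxx.
    have h3 : (a == \tr B + a) = false.
      apply/negbTE/eqP => h; move/eqP: trn0; apply.
      by have := congr1 (fun t => t - a) h; rewrite addrK subrr.
    by rewrite !inE h1 h2 h3.
  - move=> x; rewrite eigenvalue_root_min => /(root_dvdp hdiv).
    by rewrite root_prod_XsubC.
move=> tr0 a a0 a1.
have b30 : b3 = 0 by rewrite -etr.
have eq1 : a + 1 = - (1 + a) by rewrite opp2 addrC.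
exists (invmx K *m Nb a b0 b1 b2 *m K), (invmx K *m Db a b2 b3 *m K).
have hdiv : mxminpoly (invmx K *m Db a b2 b3 *m K) %|
    \prod_(r <- [:: 0; 1; a; a + 1]) ('X - r%:P).
  apply: mxminpoly_min; rewrite conj_horner //.
  rewrite !big_cons big_nil !rmorphM !rmorphB /= horner_mx_X !horner_mx_C.
  rewrite raddf0 subr0 -!mulmxE mulmx1 eq1.
  by rewrite (mulmxA (Db a b2 b3)) annDb // mulmx0 mul0mx.
split.
- by rewrite {1}eB -mulmxDl -mulmxDr (CNDb a).
- by rewrite conj_mul // NNb mulmx0 mul0mx.
- apply/diagonalizableP; exists [:: 0; 1; a; a + 1] => //=.
  have h1 : (0 == a) = false by rewrite eq_sym (negbTE a0).
  have h2 : (0 == a + 1) = false.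
    apply/negbTE/eqP => /esym/eqP; rewrite addr_eq0 opp2 => /eqP h.
    by move: a1; rewrite h eqxx.
  have h3 : (1 == a) = false by rewrite eq_sym (negbTE a1).
  have h4 : (1 == a + 1) = false.
    apply/negbTE/eqP => h; move/eqP: a0; apply.
    by have := congr1 (fun t => t - 1) h; rewrite addrK subrr.
  have h5 : (a == a + 1) = false.
    apply/negbTE/eqP => h; have := congr1 (fun t => t - a) h.
    by rewrite subrr addrC addKr => /eqP; rewrite eq_sym oner_eq0.
  by rewrite !inE h1 h2 h3 h4 h5 eq_sym oner_eq0.
move=> x; split.
  by rewrite eigenvalue_root_min => /(root_dvdp hdiv); rewrite root_prod_XsubC.
move=> hx; apply/eigenvalueP; exists (evb a b2 x *m K).
  rewrite !mulmxA mulmxK // evbP //; first by rewrite scalemxAl.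
  move: hx; rewrite !inE => /or4P [] /eqP ->; rewrite ?eq1; ring.
apply/eqP => /(congr1 (fun M => M *m invmx K)); rewrite mulmxK // mul0mx.
by apply/eqP; exact: evb_neq0.
Qed.
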